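(* In the triangle $ABC$ with $a=\sqrt{2-\sqrt2}$ and $b=c=1$, the triangle center $X_{26}$ coincides with vertex $A$.
   Context: $X_n$ denotes the $n$-th triangle center listed in Kimberling's Encyclopedia of Triangle Centers (ETC), given by barycentric coordinates in terms of $a=BC$, $b=CA$, $c=AB$. *)

(* Defs.v *)
From Stdlib Require Import Reals.
Open Scope R_scope.

(* Cosine of the angle opposite side x in a triangle with sides x, y, z
   (law of cosines). *)
Definition cos_opp (x y z : R) : R := (y^2 + z^2 - x^2) / (2 * y * z).

Definition cos2_opp (x y z : R) : R := 2 * (cos_opp x y z)^2 - 1.

(* First barycentric coordinate of X(26) (circumcenter of the tangential
   triangle), ETC: trilinears a (b^2 cos 2B + c^2 cos 2C - a^2 cos 2A),
   hence barycentrics a^2 (b^2 cos 2B + c^2 cos 2C - a^2 cos 2A). *)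
Definition X26_first (a b c : R) : R :=
  a^2 * (b^2 * cos2_opp b c a + c^2 * cos2_opp c a b - a^2 * cos2_opp a b c).

Definition X26 (a b c : R) : R * R * R :=
  (X26_first a b c, X26_first b c a, X26_first c a b).

Definition bary_same (p q : R * R * R) : Prop :=
  exists k : R, k <> 0 /\
    let '(p1, p2, p3) := p in let '(q1, q2, q3) := q in
    p1 = k * q1 /\ p2 = k * q2 /\ p3 = k * q3.

Definition vertexA : R * R * R := (1, 0, 0).

(* Main.v *)
Require Import Defs.
From Stdlib Require Import Reals Lra Psatz.
Open Scope R_scope.

Theorem theorem3p7 :
  bary_same (X26 (sqrt (2 - sqrt 2)) 1 1) vertexA.
Proof.
  set (q := sqrt 2).
  assert (Hs2 : q * q = 2) by (apply sqrt_sqrt; lra).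
  assert (Hs0 : 0 < q) by (apply sqrt_lt_R0; lra).
  assert (Hs1 : q < 2) by nra.
  set (a := sqrt (2 - q)).
  assert (Ha2 : a * a = 2 - q) by (apply sqrt_sqrt; lra).
  assert (Ha0 : 0 < a) by (apply sqrt_lt_R0; lra).
  assert (CA : cos_opp a 1 1 = q / 2).
  { unfold cos_opp. replace (a ^ 2) with (a*a) by ring. rewrite Ha2. field. }
  assert (CB : cos_opp 1 1 a = a / 2).
  { unfold cos_opp. field. lra. }
  assert (CC : cos_opp 1 a 1 = a / 2).
  { unfold cos_opp. field. lra. }
  assert (EA : cos2_opp a 1 1 = 0).
  { unfold cos2_opp. rewrite CA. nra. }
  assert (EB : cos2_opp 1 1 a = - q / 2).
  { unfold cos2_opp. rewrite CB. nra. }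
  assert (EC : cos2_opp 1 a 1 = - q / 2).
  { unfold cos2_opp. rewrite CC. nra. }
  exists (- (2 - q) * q). split.
  { intro H. nra. }
  unfold X26, vertexA, X26_first. rewrite EA, EB, EC.
  replace (a^2) with (a*a) by ring. rewrite Ha2.
  split; [|split]; field_simplify; nra.
Qed.
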